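(* Let $\Omega=\{1,\dots,n\}$ and $f:2^{\Omega}\to\mathbb{R}$. Define $f_1,f_2:2^{\Omega}\to\mathbb{R}$ by $f_1(\mathcal{S})=f(\mathcal{S}^c)$ and $f_2(\mathcal{S})=f(\mathcal{S})+f(\mathcal{S}^c)-f(\Omega)$, where $\mathcal{S}^c=\Omega\setminus\mathcal{S}$. For $\mathcal{A}\subseteq\Omega$ define $f_{\mathcal{A}}:2^{\Omega\setminus\mathcal{A}}\to\mathbb{R}$ by $f_{\mathcal{A}}(\mathcal{S})=f(\mathcal{A}\cup\mathcal{S})$. For a positive integer $q$ dividing $n$, let $\Omega(q)=\{1,\dots,n/q\}$, $\mathcal{S}(i)=\{(i-1)q+1,\dots,iq\}$ for $i\in\Omega(q)$, and $f_q:2^{\Omega(q)}\to\mathbb{R}$, $f_q(\mathcal{S})=f(\bigcup_{i\in\mathcal{S}}\mathcal{S}(i))$. Let $g:2^{\Omega}\to\mathbb{R}$ be modular and define $f\circledast g(\mathcal{S})=\min_{\mathcal{Z}\subseteq\mathcal{S}} f(\mathcal{Z})+g(\mathcal{S}\setminus\mathcal{Z})$. Then (i) $\mathcal{E}[f]=\mathcal{E}[f_1]$; (ii) $2\mathcal{E}[f]\ge\mathcal{E}[f_2]$; (iii) $\mathcal{E}[f]\ge\mathcal{E}[f_{\mathcal{A}}]$; (iv) $\mathcal{E}[f]\ge\mathcal{E}[f_q]$; (v) $\mathcal{E}[f]\ge\mathcal{E}[f\circledast g]$.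
   Context: For a set function $h$ on a finite ground set $V$, $\mathcal{E}[h]=\max_{\mathcal{A},\mathcal{B}\subseteq V} h(\mathcal{A}\cup\mathcal{B})+h(\mathcal{A}\cap\mathcal{B})-h(\mathcal{A})-h(\mathcal{B})$ (the maximum is taken over subsets of the ground set of $h$). A set function $g$ is modular if both $g$ and $-g$ are submodular. *)

(* Defs.v *)
From HB Require Import structures.
From mathcomp Require Import all_boot all_order all_algebra.
Set Implicit Arguments. Unset Strict Implicit. Unset Printing Implicit Defensive.
Import Order.TTheory GRing.Theory Num.Theory.
Local Open Scope ring_scope.

Section Defs.
Variable R : realFieldType.

(* E_D[h] : max over A, B subsets of the ground set D of
   h(A u B) + h(A n B) - h(A) - h(B).  The seed value 0 is attained
   (take A = B), so this big max is exactly the maximum. *)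
Definition Ecal (T : finType) (D : {set T}) (h : {set T} -> R) : R :=
  \big[Num.max/0]_(p : {set T} * {set T} | (p.1 \subset D) && (p.2 \subset D))
     (h (p.1 :|: p.2) + h (p.1 :&: p.2) - h p.1 - h p.2).

Definition submodular (T : finType) (h : {set T} -> R) : Prop :=
  forall A B : {set T}, h (A :|: B) + h (A :&: B) <= h A + h B.

Definition modular (T : finType) (g : {set T} -> R) : Prop :=
  submodular g /\ submodular (fun S => - g S).

Definition f1 (T : finType) (f : {set T} -> R) (S : {set T}) : R := f (~: S).
Definition f2 (T : finType) (f : {set T} -> R) (S : {set T}) : R :=
  f S + f (~: S) - f [set: T].
(* f_A(S) = f(A u S), considered on the ground set Omega \ A *)
Definition fres (T : finType) (f : {set T} -> R) (A : {set T}) (S : {set T}) : R :=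
  f (A :|: S).

(* block i (0-indexed) of size q in 'I_n: {j | j / q = i},
   i.e. the 1-indexed {(i-1)q+1, ..., iq} *)
Definition block (n q : nat) (i : 'I_(n %/ q)) : {set 'I_n} :=
  [set j : 'I_n | (j %/ q)%N == i].
Definition fq (n q : nat) (f : {set 'I_n} -> R) (S : {set 'I_(n %/ q)}) : R :=
  f (\bigcup_(i in S) @block n q i).

(* (f conv g)(S) = min_{Z subset S} f(Z) + g(S \ Z); seed f S + g set0 is attained (Z = S) *)
Definition conv (T : finType) (f g : {set T} -> R) (S : {set T}) : R :=
  \big[Num.min/(f S + g set0)]_(Z : {set T} | Z \subset S) (f Z + g (S :\: Z)).

End Defs.

(* Main.v *)
Require Import Defs.
From HB Require Import structures.
From mathcomp Require Import all_boot all_order all_algebra.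
From mathcomp Require Import lra.
Import Order.TTheory GRing.Theory Num.Theory.
Local Open Scope ring_scope.

Set Implicit Arguments.
Section H.
Variable R : realFieldType.

Definition Dl (T : finType) (h : {set T} -> R) (A B : {set T}) := h (A :|: B) + h (A :&: B) - h A - h B.

Lemma Ecal_ge (T : finType) (D : {set T}) (h : {set T} -> R) (A B : {set T}) :
  A \subset D -> B \subset D -> Dl h A B <= Ecal D h.
Proof. by move=> HA HB; apply: (@le_bigmax_cond _ _ _ _ (A, B)) => /=; rewrite HA HB. Qed.

Lemma Ecal_ge0 (T : finType) (D : {set T}) (h : {set T} -> R) : 0 <= Ecal D h.
Proof. by have := Ecal_ge h (sub0set D) (sub0set D); rewrite /Dl setU0 setI0 => H; apply: le_trans H; rewrite addrK subrr. Qed.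

Lemma Ecal_le (T : finType) (D : {set T}) (h : {set T} -> R) c : 0 <= c ->
  (forall A B : {set T}, A \subset D -> B \subset D -> Dl h A B <= c) -> Ecal D h <= c.
Proof. by move=> c0 H; apply: bigmax_le => // -[A B] /andP[/= HA HB]; apply: H. Qed.

Lemma conv_wit (T : finType) (f g : {set T} -> R) (S : {set T}) :
  exists2 Z : {set T}, Z \subset S & conv f g S = f Z + g (S :\: Z).
Proof.
case: (@arg_minP _ _ _ S (fun Z => Z \subset S) (fun Z => f Z + g (S :\: Z)) (subxx S)).
move=> Z HZ Hmin; exists Z => //; apply/eqP; rewrite eq_le.
rewrite /conv; apply/andP; split; first exact: bigmin_le_cond.
apply/bigmin_geP; split; last exact: Hmin.
by have := Hmin S (subxx S); rewrite setDv.
Qed.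

Lemma conv_le (T : finType) (f g : {set T} -> R) (S Z : {set T}) :
  Z \subset S -> conv f g S <= f Z + g (S :\: Z).
Proof. by move=> HZ; rewrite /conv; apply: bigmin_le_cond. Qed.

Lemma modD (T : finType) (g : {set T} -> R) (S Z : {set T}) : modular g -> Z \subset S ->
  g (S :\: Z) = g S + g set0 - g Z.
Proof.
move=> [H1 H2] HZ.
have E1 : (S :\: Z) :|: Z = S.
  by rewrite setUC -{1}(setIidPr HZ) setID.
have E2 : (S :\: Z) :&: Z = set0.
  by apply/setP=> x; rewrite !inE; case: (x \in Z); rewrite ?andbF.
have := H1 (S :\: Z) Z; have := H2 (S :\: Z) Z; rewrite E1 E2 => a b.
apply/eqP; rewrite eq_le; apply/andP; split; rewrite -subr_ge0 ?subr_ge0 //; move: a b => a b; lra.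
Qed.
End H.
Arguments Ecal_ge {R T D} h {A B}.
Arguments Ecal_ge0 {R T}.
Arguments Ecal_le {R T D h}.
Arguments conv_wit {R T}.
Arguments conv_le {R T} f g {S Z}.
Arguments modD {R T g S Z}.

Theorem mainTheorem3 (R : realFieldType) (n : nat) (f : {set 'I_n} -> R) :
  [/\ Ecal [set: 'I_n] f = Ecal [set: 'I_n] (f1 f),
      Ecal [set: 'I_n] (f2 f) <= 2 * Ecal [set: 'I_n] f,
      (forall A : {set 'I_n}, Ecal (~: A) (fres f A) <= Ecal [set: 'I_n] f),
      (forall q : nat, (0 < q)%N -> (q %| n)%N ->
          Ecal [set: 'I_(n %/ q)] (@fq R n q f) <= Ecal [set: 'I_n] f)
    & (forall g : {set 'I_n} -> R, modular g ->
          Ecal [set: 'I_n] (conv f g) <= Ecal [set: 'I_n] f)].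
Proof.
have E0 := Ecal_ge0 [set: 'I_n] f.
split.
- apply/le_anti/andP; split; apply: Ecal_le; rewrite ?Ecal_ge0 // => A B _ _.
    have := Ecal_ge (f1 f) (subsetT (~: A)) (subsetT (~: B)).
    by rewrite /Dl /f1 -setCI -setCU !setCK => H; lra.
  have := Ecal_ge f (subsetT (~: A)) (subsetT (~: B)).
  by rewrite /Dl /f1 setCU setCI => H; lra.
- apply: Ecal_le; first lra.
  move=> A B _ _.
  have := Ecal_ge f (subsetT A) (subsetT B).
  have := Ecal_ge f (subsetT (~: A)) (subsetT (~: B)).
  by rewrite /Dl /f2 setCU setCI => H1 H2; lra.
- move=> A; apply: Ecal_le => // X Y _ _.
  have := Ecal_ge f (subsetT (A :|: X)) (subsetT (A :|: Y)).
  have e1 : (A :|: X) :|: (A :|: Y) = A :|: (X :|: Y).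
    by apply/setP=> x; rewrite !inE; case: (x \in A); case: (x \in X); case: (x \in Y).
  have e2 : (A :|: X) :&: (A :|: Y) = A :|: (X :&: Y).
    by apply/setP=> x; rewrite !inE; case: (x \in A); case: (x \in X); case: (x \in Y).
  by rewrite /Dl /fres e1 e2.
- move=> q _ _; apply: Ecal_le => // X Y _ _.
  set U := fun S : {set 'I_(n %/ q)} => \bigcup_(i in S) @block n q i.
  have := Ecal_ge f (subsetT (U X)) (subsetT (U Y)).
  have e1 : U (X :|: Y) = U X :|: U Y by rewrite /U bigcup_setU.
  have e2 : U (X :&: Y) = U X :&: U Y.
    apply/setP=> j; rewrite inE; apply/bigcupP/andP.
      move=> [i]; rewrite inE => /andP[H1 H2] Hj; split; apply/bigcupP; by exists i.
    move=> [/bigcupP[i1 H1 b1] /bigcupP[i2 H2 b2]].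
    move: b1 b2; rewrite !inE => /eqP b1 /eqP b2.
    have e : i1 = i2 by apply: val_inj; rewrite /= -b1 -b2.
    by subst i2; exists i1; rewrite ?inE ?H1 ?H2 ?b1.
  rewrite /Dl /fq. move: e1 e2. rewrite /U => -> ->. done.
- move=> g Hg; apply: Ecal_le => // A B _ _.
  have [Za HZa ea] := conv_wit f g A.
  have [Zb HZb eb] := conv_wit f g B.
  have hU := conv_le f g (setUSS HZa HZb).
  have hI := conv_le f g (setISS HZa HZb).
  rewrite /Dl ea eb (modD Hg HZa) (modD Hg HZb).
  move: hU hI; rewrite (modD Hg (setUSS HZa HZb)) (modD Hg (setISS HZa HZb)).
  have := Ecal_ge f (subsetT Za) (subsetT Zb).
  case: Hg => Hs Hn.
  have := Hs A B; have := Hn A B; have := Hs Za Zb; have := Hn Za Zb.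
  rewrite /Dl /=; move=> h1 h2 h3 h4 h5 h6 h7; lra.
Qed.
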